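(* Let $p$ be a prime, $\zeta=\zeta_{p^2}$ a primitive $p^2$th root of unity, $t=1-\zeta$, $C_{p^2}$ cyclic with generator $c$, and $\omega_{p^2}\colon\mathbb{Z}[\zeta]C_{p^2}\to W^{(0)}:=\prod_{j\in[0,p^2-1]}\mathbb{Z}[\zeta]$, $c\mapsto(\zeta^j)_j$. For $k\in[0,p^2-1]$ let $\xi_k:=\bigl((-1)^kt^k\binom{j}{k}\bigr)_{j\in[0,p^2-1]}$, and let $W^{(1)}$ be the $\mathbb{Z}[\zeta]$-span of $\xi_0,\dots,\xi_{p^2-1}$. Let $\gamma:=\sum_{k\in[1,p-1]}t^{k-1}/k$ and $f(X):=\gamma X^p-\sum_{k\in[1,p-1]}\frac{t^{k-1}}{k}X^k\in\mathbb{Z}_{(p)}[\zeta][X]$. Define \[ W^{(2)}:=\Bigl\{\sum_{k\in[0,p^2-1]}z_k\xi_k\;\Bigm|\;z_k\in\mathbb{Z}[\zeta],\ \bigl(X^if^j(X)\bigr)\bigl[(z_k)_{k\in[0,p^2-1]}\bigr]\equiv0\pmod{t^{j(p-1)}\mathbb{Z}_{(p)}[\zeta]}\ \text{for all }i\in[0,p-1],\ j\in[0,p-1]\Bigr\}. \] Then $W^{(2)}\subseteq W^{(1)}\subseteq W^{(0)}$ and $\omega_{p^2}$ maps $\mathbb{Z}[\zeta]C_{p^2}$ isomorphically onto $W^{(2)}$.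
   Context: For a polynomial $g(X)=\sum_{i\ge0}a_iX^i$ and a tuple $(z_k)_{k\in[0,s]}$, the evaluation is $g[(z_k)_{k\in[0,s]}]:=\sum_{k\in[0,s]}a_kz_k$ (coefficients beyond degree $s$ ignored); $f^j$ is the $j$th power of $f$ in the polynomial ring. $\mathbb{Z}_{(p)}$ is $\mathbb{Z}$ localized at $(p)$. $\binom{j}{k}=0$ for $k>j$. *)

(* Defs.v *)
(* Z[zeta] is realised inside the algebraic complex numbers algC. *)
From mathcomp Require Import all_boot all_order all_algebra all_field.
Unset Printing Implicit Defensive.
Import Order.TTheory GRing.Theory Num.Theory.
Local Open Scope ring_scope.

Definition inZz (z x : algC) : Prop :=
  exists (n : nat) (a : nat -> int), x = \sum_(i < n) (a i)%:~R * z ^+ i.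

Definition inZpz (p : nat) (z x : algC) : Prop :=
  exists (s : int) (y : algC), ~~ (p%:Z %| s)%Z /\ inZz z y /\ x = y / s%:~R.

Definition tz (z : algC) : algC := 1 - z.

Definition gammaz (p : nat) (z : algC) : algC :=
  \sum_(1 <= k < p) (tz z) ^+ k.-1 / k%:R.

Definition fpoly (p : nat) (z : algC) : {poly algC} :=
  gammaz p z *: 'X^p - \sum_(1 <= k < p) ((tz z) ^+ k.-1 / k%:R) *: 'X^k.

(* g[(z_k)_{k in [0,n-1]}] = sum_k g_k z_k  (higher coefficients ignored) *)
Definition peval (n : nat) (g : {poly algC}) (zs : 'I_n -> algC) : algC :=
  \sum_(k < n) g`_k * zs k.

Definition xi (p : nat) (z : algC) (k j : 'I_(p ^ 2)) : algC :=
  (-1) ^+ k * (tz z) ^+ k * ('C(j, k))%:R.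

Definition W0 (p : nat) (z : algC) (w : 'I_(p ^ 2) -> algC) : Prop :=
  forall j, inZz z (w j).

Definition W1 (p : nat) (z : algC) (w : 'I_(p ^ 2) -> algC) : Prop :=
  exists zs : 'I_(p ^ 2) -> algC, (forall k, inZz z (zs k)) /\
    forall j, w j = \sum_(k < p ^ 2) zs k * xi p z k j.

Definition W2 (p : nat) (z : algC) (w : 'I_(p ^ 2) -> algC) : Prop :=
  exists zs : 'I_(p ^ 2) -> algC, (forall k, inZz z (zs k)) /\
    (forall i j : nat, (i < p)%N -> (j < p)%N ->
       exists y, inZpz p z y /\
         peval (p ^ 2) ('X^i * (fpoly p z) ^+ j) zs = (tz z) ^+ (j * (p - 1))%N * y) /\
    forall j, w j = \sum_(k < p ^ 2) zs k * xi p z k j.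

(* Elements of the group ring Z[zeta] C_{p^2}: a = sum_i a_i c^i, a_i in Z[zeta] *)
Definition inGR (p : nat) (z : algC) (a : 'I_(p ^ 2) -> algC) : Prop :=
  forall i, inZz z (a i).

Definition grmul (p : nat) (a b : 'I_(p ^ 2) -> algC) (k : 'I_(p ^ 2)) : algC :=
  \sum_(i < p ^ 2) \sum_(i' < p ^ 2 | ((i + i') %% p ^ 2 == k)%N) a i * b i'.

(* omega_{p^2} : c |-> (zeta^j)_j, so sum_i a_i c^i |-> (sum_i a_i zeta^(i j))_j *)
Definition omega (p : nat) (z : algC) (a : 'I_(p ^ 2) -> algC) (j : 'I_(p ^ 2)) : algC :=
  \sum_(i < p ^ 2) a i * z ^+ (i * j)%N.

(* Main.v *)
Require Import Defs.
From mathcomp Require Import all_boot all_order all_algebra all_field.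
From mathcomp Require Import ring.
Import Order.TTheory GRing.Theory Num.Theory.
Local Open Scope ring_scope.

Section Main.
Variable p : nat.
Variable z : algC.

Local Notation R := (inZz z).
Local Notation Rp := (inZpz p z).
Local Notation t := (tz z).

Lemma inZzP x : R x <-> exists P : {poly int}, x = (map_poly intr P).[z].
Proof.
split.
- case=> n [a ->]; exists (\sum_(i < n) (a i)%:P * 'X^i).
  rewrite rmorph_sum horner_sum; apply: eq_bigr => i _.
  by rewrite rmorphM /= map_polyC map_polyXn hornerCM hornerXn.
- case=> P ->; exists (size P), (fun i => P`_i).
  rewrite (@horner_coef_wide _ (size P)); last first.
    by rewrite size_map_inj_poly //; apply: intr_inj.
  by apply: eq_bigr => i _; rewrite coef_map.
Qed.

Lemma R_poly (P : {poly int}) : R ((map_poly intr P).[z]).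
Proof. by apply/inZzP; exists P. Qed.

Lemma RD x y : R x -> R y -> R (x + y).
Proof.
move=> /inZzP[P ->] /inZzP[Q ->]; apply/inZzP; exists (P + Q).
by rewrite rmorphD hornerD.
Qed.

Lemma RM x y : R x -> R y -> R (x * y).
Proof.
move=> /inZzP[P ->] /inZzP[Q ->]; apply/inZzP; exists (P * Q).
by rewrite rmorphM hornerM.
Qed.

Lemma RN x : R x -> R (- x).
Proof.
move=> /inZzP[P ->]; apply/inZzP; exists (- P).
by rewrite rmorphN hornerN.
Qed.

Lemma Rint (k : int) : R (k%:~R).
Proof. by apply/inZzP; exists k%:P; rewrite map_polyC hornerC. Qed.

Lemma Rnat (k : nat) : R (k%:R).
Proof. by have := Rint k; rewrite -pmulrn. Qed.

Lemma R0 : R 0. Proof. exact: (Rnat 0). Qed.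
Lemma R1 : R 1. Proof. exact: (Rnat 1). Qed.

Lemma Rz : R z.
Proof. by apply/inZzP; exists 'X; rewrite map_polyX hornerX. Qed.

Lemma RB x y : R x -> R y -> R (x - y).
Proof. by move=> ? ?; apply: RD => //; apply: RN. Qed.

Lemma RX x k : R x -> R (x ^+ k).
Proof. by move=> Rx; elim: k => [|k IH]; [rewrite expr0; exact: R1| rewrite exprS; apply: RM]. Qed.

Lemma Rsum (I : Type) (r : seq I) (P : pred I) (F : I -> algC) :
  (forall i, P i -> R (F i)) -> R (\sum_(i <- r | P i) F i).
Proof. by move=> H; apply: (big_ind R) => //; [exact: R0 | exact: RD]. Qed.

Lemma Rprod (I : Type) (r : seq I) (P : pred I) (F : I -> algC) :
  (forall i, P i -> R (F i)) -> R (\prod_(i <- r | P i) F i).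
Proof. by move=> H; apply: (big_ind R) => //; [exact: R1 | exact: RM]. Qed.

Lemma Rt : R t.
Proof. by rewrite /tz; apply: RB; [exact: R1| exact: Rz]. Qed.

Lemma RzX k : R (z ^+ k).
Proof. exact: RX Rz. Qed.

Lemma RMn x k : R x -> R (x *+ k).
Proof. by move=> Rx; rewrite -mulr_natr; apply: RM => //; apply: Rnat. Qed.


Hypothesis pr : prime p.

Lemma ndvd_mul {s1 s2 : int} : ~~ (p%:Z %| s1)%Z -> ~~ (p%:Z %| s2)%Z ->
  ~~ (p%:Z %| s1 * s2)%Z.
Proof. by rewrite !dvdzE abszM Euclid_dvdM // negb_or => -> ->. Qed.

Lemma ndvd_neq0 {s : int} : ~~ (p%:Z %| s)%Z -> (s%:~R : algC) != 0.
Proof. by rewrite intr_eq0; apply: contra => /eqP ->; rewrite dvdz0. Qed.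

Lemma Rp_R x : R x -> Rp x.
Proof.
move=> Rx; exists 1, x; split; last by rewrite divr1.
by rewrite dvdzE /= dvdn1; apply/eqP => p1; move: pr; rewrite p1.
Qed.

Lemma RpD x y : Rp x -> Rp y -> Rp (x + y).
Proof.
case=> s1 [y1 [n1 [R1 ->]]] [s2 [y2 [n2 [R2 ->]]]].
exists (s1 * s2), (y1 * s2%:~R + y2 * s1%:~R); split; first exact: ndvd_mul.
split; first by apply: RD; apply: RM => //; apply: Rint.
have h1 := ndvd_neq0 n1; have h2 := ndvd_neq0 n2.
rewrite intrM; field; by rewrite h1 h2.
Qed.

Lemma RpM x y : Rp x -> Rp y -> Rp (x * y).
Proof.
case=> s1 [y1 [n1 [R1 ->]]] [s2 [y2 [n2 [R2 ->]]]].
exists (s1 * s2), (y1 * y2); split; first exact: ndvd_mul.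
split; first by apply: RM.
have h1 := ndvd_neq0 n1; have h2 := ndvd_neq0 n2.
rewrite intrM; field; by rewrite h1 h2.
Qed.

Lemma RpN x : Rp x -> Rp (- x).
Proof.
case=> s1 [y1 [n1 [R1 ->]]]; exists s1, (- y1); split => //; split; first exact: RN.
by rewrite mulNr.
Qed.

Lemma RpB x y : Rp x -> Rp y -> Rp (x - y).
Proof. by move=> ? ?; apply: RpD => //; apply: RpN. Qed.

Lemma Rp0 : Rp 0. Proof. exact: Rp_R R0. Qed.
Lemma Rp1 : Rp 1. Proof. exact: Rp_R R1. Qed.

Lemma RpX x k : Rp x -> Rp (x ^+ k).
Proof. by move=> Rx; elim: k => [|k IH]; [rewrite expr0; exact: Rp1| rewrite exprS; apply: RpM]. Qed.

Lemma Rpsum (I : Type) (r : seq I) (P : pred I) (F : I -> algC) :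
  (forall i, P i -> Rp (F i)) -> Rp (\sum_(i <- r | P i) F i).
Proof. by move=> H; apply: (big_ind Rp) => //; [exact: Rp0 | exact: RpD]. Qed.

Lemma Rpprod (I : Type) (r : seq I) (P : pred I) (F : I -> algC) :
  (forall i, P i -> Rp (F i)) -> Rp (\prod_(i <- r | P i) F i).
Proof. by move=> H; apply: (big_ind Rp) => //; [exact: Rp1 | exact: RpM]. Qed.

Lemma Rpdiv x (s : int) : Rp x -> ~~ (p%:Z %| s)%Z -> Rp (x / s%:~R).
Proof.
case=> s1 [y1 [n1 [R1 ->]]] ns; exists (s1 * s), y1; split; first exact: ndvd_mul.
split => //; rewrite intrM invfM mulrA //.
Qed.

Lemma Rpinvn k : (0 < k < p)%N -> Rp (k%:R^-1).
Proof.
case/andP=> k0 kp; rewrite -[_^-1]mul1r.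
have -> : (k%:R : algC) = (k%:Z)%:~R by [].
apply: Rpdiv; first exact: Rp1.
rewrite dvdzE /=; apply/negP => /(dvdn_leq k0); by rewrite leqNgt kp.
Qed.

Definition dvd (e : nat) (x : algC) := exists y, Rp y /\ x = t ^+ e * y.

Lemma dvd0 e : dvd e 0.
Proof. by exists 0; split; [exact: Rp0 | rewrite mulr0]. Qed.

Lemma dvdD e x y : dvd e x -> dvd e y -> dvd e (x + y).
Proof. by case=> a [Ra ->] [b [Rb ->]]; exists (a + b); split; [apply: RpD | rewrite mulrDr]. Qed.

Lemma dvdN e x : dvd e x -> dvd e (- x).
Proof. by case=> a [Ra ->]; exists (- a); split; [apply: RpN | rewrite mulrN]. Qed.

Lemma dvdB e x y : dvd e x -> dvd e y -> dvd e (x - y).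
Proof. by move=> ? ?; apply: dvdD => //; apply: dvdN. Qed.

Lemma dvdMl e c x : Rp c -> dvd e x -> dvd e (c * x).
Proof. by move=> Rc [a [Ra ->]]; exists (c * a); split; [apply: RpM | rewrite mulrCA]. Qed.

Lemma dvdMr e c x : Rp c -> dvd e x -> dvd e (x * c).
Proof. by move=> Rc dx; rewrite mulrC; apply: dvdMl. Qed.

Lemma dvdM e1 e2 x y : dvd e1 x -> dvd e2 y -> dvd (e1 + e2) (x * y).
Proof.
case=> a [Ra ->] [b [Rb ->]]; exists (a * b); split; first by apply: RpM.
by rewrite exprD; ring.
Qed.

Lemma dvdX e x k : dvd e x -> dvd (e * k) (x ^+ k).
Proof.
move=> dx; elim: k => [|k IH]; first by rewrite muln0 expr0; exists 1; split; [exact: Rp1| rewrite mulr1].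
by rewrite mulnS exprS; apply: dvdM.
Qed.

Lemma dvd_le e e' x : (e' <= e)%N -> dvd e x -> dvd e' x.
Proof.
move=> le [a [Ra ->]]; exists (t ^+ (e - e') * a); split.
  by apply: RpM => //; apply: RpX; apply: Rp_R; exact: Rt.
by rewrite mulrA -exprD subnKC.
Qed.

Lemma dvd_sum e (I : Type) (r : seq I) (P : pred I) (F : I -> algC) :
  (forall i, P i -> dvd e (F i)) -> dvd e (\sum_(i <- r | P i) F i).
Proof. by move=> H; apply: (big_ind (dvd e)) => //; [exact: dvd0 | exact: dvdD]. Qed.

Lemma dvdRp x : dvd 0 x -> Rp x.
Proof. by case=> a [Ra ->]; rewrite expr0 mul1r. Qed.

Lemma Rp_dvd0 x : Rp x -> dvd 0 x.
Proof. by move=> Rx; exists x; rewrite expr0 mul1r. Qed.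


Hypothesis pz : (p ^ 2).-primitive_root z.
Local Notation n := (p ^ 2)%N.

Lemma p_gt1 : (1 < p)%N. Proof. exact: prime_gt1. Qed.
Lemma p_gt0 : (0 < p)%N. Proof. exact: prime_gt0. Qed.
Lemma n_gt1 : (1 < n)%N.
Proof. by rewrite (ltn_trans p_gt1) // -{1}(expn1 p) ltn_exp2l // p_gt1. Qed.

Lemma TEL (x : algC) m : (1 - x) * \sum_(i < m) x ^+ i = 1 - x ^+ m.
Proof. by rewrite -opprB -[1 - x ^+ m]opprB subrX1 mulNr. Qed.

Lemma prim_neq1 {w : algC} {k} : (1 < k)%N -> k.-primitive_root w -> w != 1.
Proof.
move=> k1 pw; apply/eqP => w1.
have := eq_prim_root_expr pw 1 0; rewrite expr1 expr0 w1 eqxx.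
by rewrite /eqn mod0n modn_small.
Qed.

Lemma t_neq0 : t != 0.
Proof. by rewrite /tz subr_eq0 eq_sym (prim_neq1 n_gt1 pz). Qed.

Definition u m := \sum_(i < m) z ^+ i.

Lemma tu m : t * u m = 1 - z ^+ m.
Proof. exact: TEL. Qed.

Lemma Ru m : R (u m).
Proof. by apply: Rsum => i _; apply: RzX. Qed.

Lemma PRODX {w : algC} {k} : (1 < k)%N -> k.-primitive_root w ->
  \prod_(1 <= i < k) (1 - w ^+ i) = k%:R.
Proof.
move=> k1 pw; have := factor_Xn_sub_1 pw.
rewrite big_ltn ?(ltn_trans _ k1) // expr0 polyC1.
have -> : ('X^k - 1 : {poly algC}) = ('X - 1) * \sum_(i < k) 'X^i.
  by rewrite subrX1.
move/(mulfI (negbT (polyXsubC_eq0 1))) => /(congr1 (horner^~ 1)) e.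
transitivity (\prod_(1 <= i < k) ('X - (w ^+ i)%:P).[1]).
  by apply: eq_bigr => i _; rewrite hornerXsubC.
rewrite -horner_prod e horner_sum.
rewrite (eq_bigr (fun _ => 1)) => [|i _]; last by rewrite hornerXn expr1n.
by rewrite sumr_const card_ord.
Qed.

Definition unitR x := exists y, R y /\ x * y = 1.

Lemma unitRM x y : unitR x -> unitR y -> unitR (x * y).
Proof.
case=> a [Ra xa] [b [Rb yb]]; exists (a * b); split; first by apply: RM.
by rewrite mulrACA xa yb mulr1.
Qed.

Lemma unitRprod (I : Type) (r : seq I) (P : pred I) (F : I -> algC) :
  (forall i, P i -> unitR (F i)) -> unitR (\prod_(i <- r | P i) F i).
Proof.
move=> H; apply: (big_ind unitR) => //; last exact: unitRM.
by exists 1; split; [exact: R1 | rewrite mulr1].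
Qed.

Lemma unitRzX k : unitR (z ^+ k).
Proof.
exists (z ^+ (n - k %% n)); split; first exact: RzX.
rewrite -(prim_expr_mod pz k) -exprD subnKC ?prim_expr_order //.
by rewrite ltnW // ltn_mod (ltn_trans _ n_gt1).
Qed.

Lemma UNIT {w : algC} {k m} : (1 < k)%N -> k.-primitive_root w -> R w ->
  coprime m k -> unitR (\sum_(i < m) w ^+ i).
Proof.
move=> k1 pw Rw cop.
have m0 : (0 < m)%N.
  case: m cop => // ; rewrite /coprime gcd0n => /eqP k1'; by rewrite k1' in k1.
case: (@egcdnP m k m0) => km kn e _.
move: e; rewrite (eqP cop) => e.
exists (\sum_(i < km) (w ^+ m) ^+ i); split.
  by apply: Rsum => i _; apply: RX; apply: RX.
have w1 : 1 - w != 0 by rewrite subr_eq0 eq_sym (prim_neq1 k1 pw).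
apply: (mulfI w1); rewrite mulr1 mulrA TEL TEL -exprM mulnC.
by rewrite -(prim_expr_mod pw) e modnMDl modn_small // expr1.
Qed.

Lemma Rprim : (p.-primitive_root (z ^+ p)).
Proof.
have d : (p %| n)%N by rewrite expnS dvdn_mulr.
have e : (n %/ p)%N = p by rewrite expnS expn1 mulKn ?p_gt0.
by have := dvdn_prim_root pz d; rewrite e.
Qed.

Local Notation w := (z ^+ p).

Lemma RwX k : R (w ^+ k). Proof. by apply: RX; apply: RzX. Qed.

Lemma P2 : \prod_(k < p) (1 - z ^+ (1 + p * k)) = 1 - w.
Proof.
pose y := z ^+ (n - 1).
have zy : z * y = 1.
  by rewrite /y -exprS subn1 prednK ?prim_expr_order // (ltn_trans _ n_gt1).
have := factor_Xn_sub_1 Rprim; move/(congr1 (horner^~ y)).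
rewrite horner_prod big_mkord => e.
have e2 : \prod_(k < p) (y - w ^+ k) = y ^+ p - 1.
  have -> : y ^+ p - 1 = ('X^p - 1 : {poly algC}).[y] by rewrite !hornerE.
  by rewrite -e; apply: eq_bigr => k _; rewrite hornerXsubC.
transitivity (\prod_(k < p) (z * (y - w ^+ k))).
  by apply: eq_bigr => k _; rewrite mulrBr zy -exprM -exprS add1n.
by rewrite big_split /= prodr_const card_ord e2 mulrBr mulr1 -exprMn zy expr1n.
Qed.

Lemma P2' : 1 - w = t ^+ p * \prod_(k < p) u (1 + p * k).
Proof.
rewrite -P2 (eq_bigr (fun k : 'I_p => t * u (1 + p * k))) => [|k _]; last by rewrite tu.
by rewrite big_split /= prodr_const card_ord.
Qed.

Lemma coprime_n m : ~~ (p %| m)%N -> coprime m n.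
Proof. by move=> h; rewrite coprime_sym coprimeXl // prime_coprime. Qed.

Lemma unit_u m : ~~ (p %| m)%N -> unitR (u m).
Proof. by move=> h; apply: (UNIT n_gt1 pz Rz); apply: coprime_n. Qed.

Lemma U1unit : unitR (\prod_(k < p) u (1 + p * k)).
Proof.
apply: unitRprod => k _; apply: unit_u.
by rewrite dvdn_addl ?dvdn_mulr // dvdn1; apply/eqP => p1; move: pr; rewrite p1.
Qed.

Lemma UDEC m : (0 < m < n)%N ->
  exists v, unitR v /\ R v /\ u m = t ^+ ((p - 1) * (p %| m)) * v.
Proof.
case/andP=> m0 mn.
case: (boolP (p %| m)%N) => pm; last first.
  by exists (u m); split; [apply: unit_u | split; [apply: Ru | rewrite muln0 expr0 mul1r]].
case/dvdnP: pm => m' em.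
have m'p : (0 < m' < p)%N.
  rewrite em muln_gt0 p_gt0 andbT in m0; rewrite m0 /=.
  by move: mn; rewrite em mulnC ltn_pmul2l ?p_gt0.
pose S := \sum_(i < m') w ^+ i.
have uS : unitR S.
  apply: (UNIT p_gt1 Rprim); first exact: RzX.
  rewrite coprime_sym prime_coprime //; case/andP: m'p => a b.
  by apply/negP => /(dvdn_leq a); rewrite leqNgt b.
exists ((\prod_(k < p) u (1 + p * k)) * S); split; first exact: unitRM U1unit uS.
split; first by apply: RM; [apply: Rprod => *; apply: Ru | apply: Rsum => *; apply: RwX].
have lhs : t * u m = (1 - w) * S by rewrite tu TEL -exprM em mulnC.
have pm : (p %| m)%N by rewrite em dvdn_mull.
have tp : t ^+ p = t * t ^+ (p - 1) by rewrite -exprS subn1 prednK ?p_gt0.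
apply: (mulfI t_neq0); rewrite lhs /= muln1 P2' tp; ring.
Qed.

Lemma P1 : (p%:R : algC) = t ^+ (p - 1) * \prod_(1 <= i < p) u (p * i).
Proof.
rewrite -(PRODX p_gt1 Rprim) -(prodr_const_nat 1 p t) -big_split /=.
by apply: eq_bigr => i _; rewrite tu exprM.
Qed.

Lemma pt : exists c, R c /\ (p%:R : algC) = t * c.
Proof.
exists (t ^+ (p - 2) * \prod_(1 <= i < p) u (p * i)); split.
  by apply: RM; [apply: RX; apply: Rt | apply: Rprod => *; apply: Ru].
rewrite P1 mulrA -exprS; congr (t ^+ _ * _).
by have := p_gt1; case: (p) => [|[|q]] //= _; rewrite !subnS subn0.
Qed.

Lemma R_Aint x : R x -> x \in Aint.
Proof.
case=> N [a ->]; apply: rpred_sum => i _; apply: rpredM; first exact: Aint_int.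
by apply: rpredX; apply: (Aint_prim_root pz).
Qed.

Lemma NOTINV r : R r -> t * r = 1 -> False.
Proof.
move=> Rr tr.
have uinv m : (0 < m < n)%N -> unitR (u m).
  move=> hm; case: (UDEC m hm) => v [uv [Rv ->]]; apply: unitRM => //.
  exists (r ^+ ((p - 1) * (p %| m))); split; first exact: RX.
  by rewrite -exprMn tr expr1n.
have : unitR (p%:R).
  rewrite P1; apply: unitRM.
    exists (r ^+ (p - 1)); split; first exact: RX.
    by rewrite -exprMn tr expr1n.
  rewrite big_nat; apply: unitRprod => i /andP[i1 ip]; apply: uinv.
  rewrite muln_gt0 p_gt0 i1 /= expnS expn1 ltn_pmul2l ?p_gt0 //.
case=> y [Ry py].
have yA : y \in Aint by apply: R_Aint.
have yC : y \in Crat.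
  have -> : y = (p%:R)^-1.
    by apply: (mulfI (_ : (p%:R : algC) != 0)); rewrite ?py ?divff // pnatr_eq0 -lt0n p_gt0.
  by rewrite rpredV rpred_nat.
have /intrP[m em] := Cint_rat_Aint yC yA.
move: py; rewrite em -[p%:R]/((p%:Z)%:~R : algC) -intrM -[1]/((1%:Z)%:~R : algC).
move/intr_inj => /(congr1 absz); rewrite abszM /= => /eqP; rewrite muln_eq1 => /andP[/eqP p1 _].
by move: pr; rewrite p1.
Qed.

Lemma Res {x} : R x -> exists k : int, exists y, R y /\ x - k%:~R = t * y.
Proof.
case=> N [a ->]; exists (\sum_(i < N) a i), (- \sum_(i < N) (a i)%:~R * u i); split.
  by apply: RN; apply: Rsum => i _; apply: RM; [apply: Rint | apply: Ru].
rewrite raddf_sum -sumrB mulrN mulr_sumr -sumrN; apply: eq_bigr => i _.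
by rewrite mulrCA tu; ring.
Qed.

Lemma cop_p {s : int} : ~~ (p%:Z %| s)%Z -> exists a b : int, a * s + b * p%:Z = 1.
Proof.
move=> ns; case: (Bezoutz s p) => a [b e]; exists a, b; rewrite e.
have : coprimez s p by rewrite coprimezE /= coprime_sym prime_coprime // -dvdzE.
by move/eqP => ->.
Qed.

Lemma Int {k : int} : dvd 1 (k%:~R) -> (p%:Z %| k)%Z.
Proof.
case=> y [[s [y1 [ns [Ry1 ey]]]] ek].
apply/negPn/negP => nk.
have [a [b e]] := cop_p (ndvd_mul nk ns).
have [c [Rc ec]] := pt.
apply: (NOTINV (a%:~R * y1 + b%:~R * c)).
  by apply: RD; apply: RM => //; apply: Rint.
have sne := ndvd_neq0 ns.
have ks : k%:~R * s%:~R = t * y1 :> algC by rewrite ek ey expr1; field.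
have := congr1 (fun q : int => (q%:~R : algC)) e.
rewrite /= intrD !intrM ks -[(p%:Z)%:~R]/(p%:R : algC) ec => E.
by apply: (etrans _ E); ring.
Qed.

Lemma dvd_int (k : int) : (p%:Z %| k)%Z -> dvd 1 (k%:~R).
Proof.
case/dvdzP => q ->; have [c [Rc ec]] := pt.
exists (q%:~R * c); split; first by apply: Rp_R; apply: RM => //; apply: Rint.
by rewrite intrM -[(p%:Z)%:~R]/(p%:R : algC) ec expr1; ring.
Qed.

Lemma ResP {x} : Rp x -> exists k : int, dvd 1 (x - k%:~R).
Proof.
case=> s [y1 [ns [Ry1 ->]]].
have [k0 [y [Ry ey]]] := Res Ry1.
have [a [b e]] := cop_p ns.
have [c [Rc ec]] := pt.
exists (k0 * a); exists ((y + k0%:~R * b%:~R * c) / s%:~R); split.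
  apply: Rpdiv => //; apply: Rp_R; apply: RD => //; apply: RM => //; apply: RM; apply: Rint.
have sne := ndvd_neq0 ns.
have e' : a%:~R * s%:~R = 1 - b%:~R * p%:R :> algC.
  have := congr1 (fun q : int => (q%:~R : algC)) e; rewrite /= intrD !intrM => E.
  rewrite -[1 - _](_ : (1%:Z)%:~R - b%:~R * p%:R = _) // -E.
  by rewrite -[(p%:Z)%:~R]/(p%:R : algC); ring.
have -> : y1 = t * y + k0%:~R by rewrite -ey; ring.
rewrite expr1 intrM; apply: (mulIf sne); rewrite mulrBl -!mulrA mulVf // mulr1.
rewrite [_ * (_ * _%:~R)]mulrC e' ec; ring.
Qed.

Lemma dvd1_int_or {x y} : Rp x -> Rp y -> dvd 1 (x * y) -> dvd 1 x \/ dvd 1 y.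
Proof.
move=> Rx Ry dxy.
have [k1 d1] := ResP Rx; have [k2 d2] := ResP Ry.
have dk : dvd 1 ((k1 * k2)%:~R).
  have -> : (k1 * k2)%:~R = x * y - x * (y - k2%:~R) - k2%:~R * (x - k1%:~R) :> algC.
    by rewrite intrM; ring.
  apply: dvdB; first (apply: dvdB => //; apply: dvdMl => //).
  by apply: dvdMl => //; apply: Rp_R; apply: Rint.
have := Int dk; rewrite dvdzE abszM Euclid_dvdM // -!dvdzE => /orP[h|h].
  left; have -> : x = (x - k1%:~R) + k1%:~R by ring.
  by apply: dvdD => //; apply: dvd_int.
right; have -> : y = (y - k2%:~R) + k2%:~R by ring.
by apply: dvdD => //; apply: dvd_int.
Qed.

Lemma not_dvd1_1 : ~ dvd 1 1.
Proof.
move=> h; have := Int (k := 1) h; rewrite dvdzE /= dvdn1 => /eqP p1.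
by move: pr; rewrite p1.
Qed.

Lemma Cancel x : Rp x -> ~ dvd 1 x -> forall e y, Rp y -> dvd e (x * y) -> dvd e y.
Proof.
move=> Rx nx; elim=> [|e IH] y Ry dxy; first exact: Rp_dvd0.
have d1 : dvd 1 (x * y) by apply: (@dvd_le e.+1 1 _ _ dxy).
case: (dvd1_int_or Rx Ry d1) => // -[y1 [Ry1 ey]].
move: dxy; rewrite ey expr1 => -[w [Rw ew]].
have : dvd e y1.
  apply: IH => //; exists w; split => //.
  by apply: (mulfI t_neq0); rewrite mulrCA ew exprS mulrA.
case=> v [Rv ->]; exists v; split => //; by rewrite mulrA -exprS.
Qed.

Lemma not_dvd1_X x k : Rp x -> ~ dvd 1 x -> ~ dvd 1 (x ^+ k).
Proof.
move=> Rx nx; elim: k => [|k IH]; first by rewrite expr0; exact: not_dvd1_1.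
rewrite exprS => h; by case: (dvd1_int_or Rx (RpX x k Rx) h).
Qed.

Lemma BIN j : (j < p)%N -> (p%:Z %| ('C(p.-1, j))%:Z - (-1) ^+ j)%Z.
Proof.
elim: j => [|j IH] jp; first by rewrite bin0 expr0 subrr dvdz0.
have hb : 'C(p, j.+1) = ('C(p.-1, j.+1) + 'C(p.-1, j))%N by rewrite -binS prednK ?p_gt0.
have -> : ('C(p.-1, j.+1))%:Z - (-1) ^+ j.+1 =
          ('C(p, j.+1))%:Z - (('C(p.-1, j))%:Z - (-1) ^+ j).
  by rewrite hb PoszD exprS; ring.
apply: rpredB; last by apply: IH; apply: ltnW.
by rewrite dvdzE /= prime_dvd_bin.
Qed.

Definition qk (k : nat) : int := ((1 + (-1) ^+ k * ('C(p.-1, k.-1))%:Z) %/ p%:Z)%Z.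

Lemma qkE k : (0 < k < p)%N ->
  (qk k)%:~R * p%:R = 1 + (-1) ^+ k * ('C(p.-1, k.-1))%:R :> algC.
Proof.
case/andP=> k0 kp.
have d : (p%:Z %| 1 + (-1) ^+ k * ('C(p.-1, k.-1))%:Z)%Z.
  have := BIN k.-1 (leq_ltn_trans (leq_pred k) kp).
  have -> : 1 + (-1) ^+ k * ('C(p.-1, k.-1))%:Z =
            (-1) ^+ k * (('C(p.-1, k.-1))%:Z - (-1) ^+ k.-1).
    case: (k) k0 => // k' _ /=.
    have xx : (-1) ^+ k' * (-1) ^+ k' = 1 :> int by rewrite -exprMn mulrNN mulr1 expr1n.
    rewrite exprS mulrBr; set x := (-1) ^+ k'.
    have -> : -1 * x * x = - (x * x) by ring.
    rewrite xx; ring.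
  by move=> h; apply: dvdz_mull.
have := congr1 (fun q : int => (q%:~R : algC)) (divzK d).
rewrite /qk /= intrM => ->.
by rewrite intrD intrM rmorphXn /= rmorphN.
Qed.

Definition lam (y : algC) := \sum_(1 <= k < p) y ^+ k / k%:R.
Definition Eq (y : algC) := \sum_(1 <= k < p) y ^+ k.-1 * (qk k)%:~R / k%:R.

Lemma RpEq y : R y -> Rp (Eq y).
Proof.
move=> Ry; rewrite /Eq big_seq; apply: Rpsum => k; rewrite mem_index_iota => hk.
apply: RpM; last by apply: Rpinvn; rewrite (leq_trans _ (proj1 (andP hk))) ?(proj2 (andP hk)).
by apply: Rp_R; apply: RM; [apply: RX | apply: Rint].
Qed.

Lemma LAMBDA y : p%:R * lam y = 1 - (1 - y) ^+ p + (- y) ^+ p + p%:R ^+ 2 * y * Eq y.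
Proof.
rewrite exprBn -(big_mkord xpredT (fun i => (-1) ^+ i * 1 ^+ (p - i) * y ^+ i *+ 'C(p, i))).
rewrite big_ltn // big_nat_recr ?p_gt0 //= subnn !expr0 !expr1n !mulr1 binn bin0 !mulr1n exprNn.
set S := \sum_(1 <= i < p) _.
transitivity (- S + p%:R ^+ 2 * y * Eq y); last first.
  rewrite [(- y) ^+ p]exprNn [1 ^+ p]expr1n; ring.
rewrite /lam /Eq mulr_sumr [p%:R ^+ 2 * y * _]mulr_sumr /S -sumrN -big_split /=.
apply: eq_big_nat => k hk; case/andP: hk => k0 kp.
have knz : (k%:R : algC) != 0 by rewrite pnatr_eq0 -lt0n.
have pnz : (p%:R : algC) != 0 by rewrite pnatr_eq0 -lt0n p_gt0.
have e2 : ('C(p, k))%:R = p%:R * ('C(p.-1, k.-1))%:R / k%:R :> algC.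
  have := mul_bin_diag p k.-1; rewrite prednK // => /(congr1 (fun m => (m%:R : algC))).
  rewrite !natrM => ->; field.
  by rewrite knz.
have e3 : (qk k)%:~R = (1 + (-1) ^+ k * ('C(p.-1, k.-1))%:R) / p%:R :> algC.
  rewrite -qkE ?k0 ?kp //; field; by rewrite pnz.
rewrite expr1n mulr1 -[_ *+ 'C(p, k)]mulr_natr e2 e3.
case: (k) k0 knz => // k' _ knz /=.
rewrite exprS; field.
by rewrite -natr1 addrC in knz; rewrite knz pnz.
Qed.

Lemma FRESH {x y} : R x -> R y -> exists r, R r /\ (x + y) ^+ p = x ^+ p + y ^+ p + p%:R * r.
Proof.
move=> Rx Ry.
exists (\sum_(1 <= i < p) x ^+ (p - i) * y ^+ i *+ ('C(p, i) %/ p)); split.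
  by apply: Rsum => i _; apply: RMn; apply: RM; apply: RX.
rewrite exprDn -(big_mkord xpredT (fun i => x ^+ (p - i) * y ^+ i *+ 'C(p, i))).
rewrite big_ltn // big_nat_recr ?p_gt0 //= subnn subn0 !expr0 mulr1 mul1r binn bin0 !mulr1n.
rewrite mulr_sumr addrA [RHS]addrAC; congr (_ + _); congr (_ + _).
apply: eq_big_nat => i /andP[i1 ip].
rewrite mulr_natl -mulrnA divnK //; apply: prime_dvd_bin => //; by rewrite i1.
Qed.

Lemma USUM m : exists r, R r /\ u m ^+ p = \sum_(i < m) w ^+ i + p%:R * r.
Proof.
elim: m => [|m [r [Rr er]]].
  exists 0; split; first exact: R0.
  by rewrite /u !big_ord0 expr0n eqn0Ngt p_gt0 mulr0 addr0.
have [r' [Rr' er']] := FRESH (Ru m) (RzX m).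
exists (r + r'); split; first by apply: RD.
rewrite /u big_ord_recr /= -/(u m) er' er big_ord_recr /= -exprM mulnC exprM; ring.
Qed.

Lemma f_eval x : t * (fpoly p z).[x] = x ^+ p * lam t - lam (t * x).
Proof.
rewrite /fpoly hornerD hornerN hornerZ hornerXn horner_sum mulrBr.
have e1 : t * gammaz p z = lam t.
  rewrite /gammaz /lam mulr_sumr; apply: eq_big_nat => k /andP[k1 _].
  by rewrite mulrA -exprS prednK.
have e2 : t * (\sum_(1 <= k < p) ((t ^+ k.-1 / k%:R) *: 'X^k).[x]) = lam (t * x).
  rewrite /lam mulr_sumr; apply: eq_big_nat => k /andP[k1 _].
  have tk : t ^+ k = t * t ^+ k.-1 by rewrite -exprS prednK.
  rewrite hornerZ hornerXn exprMn tk; ring.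
by rewrite mulrA e1 e2 mulrC.
Qed.

Lemma KF m : dvd (p - 1) ((fpoly p z).[u m]).
Proof.
set f := (fpoly p z).[u m].
have [r [Rr er]] := USUM m.
set S := \sum_(i < m) w ^+ i in er.
have L1 := LAMBDA t; have L2 := LAMBDA (t * u m).
have zt : 1 - t = z by rewrite /tz; ring.
have z2 : 1 - t * u m = z ^+ m by rewrite tu; ring.
have wm : (z ^+ m) ^+ p = 1 - (1 - w) * S by rewrite TEL -!exprM mulnC; ring.
rewrite zt in L1; rewrite z2 wm -[- (t * u m)]mulNr exprMn er in L2.
have pnz : (p%:R : algC) != 0 by rewrite pnatr_eq0 -lt0n p_gt0.
have e1 : p%:R * (t * f) = p%:R * ((1 - w) * r
    + p%:R * t * ((S + p%:R * r) * Eq t - u m * Eq (t * u m))).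
  rewrite /f f_eval mulrBr [p%:R * (_ * lam t)]mulrCA L1 L2 er; ring.
have te := mulfI pnz e1.
have [c' [Rc' ec']] : exists c', R c' /\ (p%:R : algC) = t ^+ (p - 1) * c'.
  by exists (\prod_(1 <= i < p) u (p * i)); split; [apply: Rprod => *; apply: Ru | exact: P1].
rewrite P2' ec' in te.
have tp : t ^+ p = t * t ^+ (p - 1) by rewrite -exprS subn1 prednK ?p_gt0.
set U1 := \prod_(k < p) u (1 + p * k) in te.
have RU1 : R U1 by apply: Rprod => *; apply: Ru.
set X := (S + _ * r) * Eq t - u m * Eq (t * u m) in te.
have RX : Rp X.
  apply: RpB; apply: RpM.
  - apply: Rp_R; apply: RD; first by apply: Rsum => *; apply: RwX.
    by apply: RM => //; apply: RM => //; apply: RX; apply: Rt.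
  - by apply: RpEq; apply: Rt.
  - by apply: Rp_R; apply: Ru.
  - by apply: RpEq; apply: RM; [apply: Rt | apply: Ru].
exists (U1 * r + c' * X); split.
  by apply: RpD; apply: RpM => //; apply: Rp_R.
apply: (mulfI t_neq0); rewrite te tp; ring.
Qed.

Local Notation f := (fpoly p z).
Local Notation gam := (gammaz p z).

Lemma Rp_gam : Rp gam.
Proof.
rewrite /gammaz big_seq; apply: Rpsum => k; rewrite mem_index_iota => hk.
apply: RpM; first by apply: Rp_R; apply: RX; apply: Rt.
by apply: Rpinvn; case/andP: hk => a b; rewrite (leq_trans _ a) ?b.
Qed.

Lemma gam_nd : ~ dvd 1 gam.
Proof.
move=> h; apply: not_dvd1_1.
have -> : (1 : algC) = gam - \sum_(2 <= k < p) t ^+ k.-1 / k%:R.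
  by rewrite /gammaz big_ltn ?p_gt1 //= expr0 invr1 mulr1 addrK.
apply: dvdB => //; rewrite big_seq; apply: dvd_sum => k; rewrite mem_index_iota => /andP[k2 kp].
exists (t ^+ k.-2 / k%:R); split.
  apply: RpM; first by apply: Rp_R; apply: RX; apply: Rt.
  by apply: Rpinvn; rewrite kp (leq_trans _ k2).
case: k k2 {kp} => [|[|k]] // _; by rewrite /= exprS expr1 mulrA.
Qed.


Lemma gam_neq0 : gam != 0.
Proof. by apply/eqP => g0; apply: gam_nd; rewrite g0; apply: dvd0. Qed.

Lemma size_lead_f : size f = p.+1 /\ lead_coef f = gam.
Proof.
rewrite /fpoly; set L := \sum_(1 <= k < p) _.
have sL : (size L <= p)%N.
  rewrite /L big_seq; apply: (big_ind (fun q : {poly algC} => (size q <= p)%N)).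
  - by rewrite size_poly0.
  - by move=> a b ha hb; rewrite (leq_trans (size_polyD _ _)) // geq_max ha hb.
  - move=> k; rewrite mem_index_iota => /andP[_ kp].
    by rewrite (leq_trans (size_scale_leq _ _)) // size_polyXn.
have sX : size (gam *: ('X^p : {poly algC})) = p.+1 by rewrite size_scale ?gam_neq0 // size_polyXn.
have lt : (size (- L) < size (gam *: ('X^p : {poly algC})))%N by rewrite size_polyN sX ltnS.
split; first by rewrite size_polyDl // sX.
by rewrite lead_coefDl // lead_coefZ lead_coefXn mulr1.
Qed.

Definition g (d : nat) := 'X^(d %% p) * f ^+ (d %/ p).
Definition e (d : nat) := ((d %/ p) * (p - 1))%N.

Lemma size_g d : (size (g d) <= d.+1)%N.
Proof.
rewrite /g (leq_trans (size_polyMleq _ _)) // size_polyXn.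
have := size_poly_exp_leq f (d %/ p); rewrite (proj1 size_lead_f) /= => h.
rewrite (leq_trans (leq_add (leqnn _) h)) //.
have E := divn_eq d p.
by rewrite addnS ltnS [X in (_ <= X)%N]E addnC mulnC.
Qed.

Lemma coef_g_high d k : (d < k)%N -> (g d)`_k = 0.
Proof. by move=> dk; rewrite nth_default // (leq_trans (size_g d)). Qed.

Lemma coef_g_diag d : (g d)`_d = gam ^+ (d %/ p).
Proof.
rewrite /g coefXnM ltnNge leq_mod /=.
have -> : (d - d %% p = (size (f ^+ (d %/ p))).-1)%N.
  by rewrite size_exp (proj1 size_lead_f) /= {1}(divn_eq d p) addnK mulnC.
by rewrite -lead_coefE lead_coef_exp (proj2 size_lead_f).
Qed.

Lemma g_eval d x : (g d).[x] = x ^+ (d %% p) * (f.[x]) ^+ (d %/ p).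
Proof. by rewrite /g hornerM hornerXn horner_exp. Qed.

Lemma PEVAL (N : nat) (q : {poly algC}) (c x : 'I_N -> algC) : (size q <= N)%N ->
  peval N q (fun k => \sum_(m < N) c m * x m ^+ k) = \sum_(m < N) c m * q.[x m].
Proof.
move=> sq; rewrite /peval.
under eq_bigr => k _ do rewrite mulr_sumr.
rewrite exchange_big /=; apply: eq_bigr => m _.
rewrite (horner_coef_wide _ sq) mulr_sumr; apply: eq_bigr => k _; ring.
Qed.

Lemma BINOM_U m (j : 'I_n) :
  \sum_(k < n) u m ^+ k * xi p z k j = z ^+ (m * j).
Proof.
rewrite exprM.
have -> : z ^+ m = - (t * u m) + 1 by rewrite tu; ring.
rewrite exprD1n (big_ord_widen _ (fun i => (- (t * u m)) ^+ i *+ 'C(j, i)) (ltn_ord j)).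
rewrite [RHS]big_mkcond /=; apply: eq_bigr => k _.
case: ifP => kj.
  by rewrite /xi -[_ *+ 'C(j, k)]mulr_natr [in RHS]exprNn [in RHS]exprMn; ring.
by rewrite /xi bin_small ?mulr0 // ltnNge -ltnS kj.
Qed.

Lemma OMEGA (A : 'I_n -> algC) (j : 'I_n) :
  \sum_(k < n) (\sum_(m < n) A m * u m ^+ k) * xi p z k j = omega p z A j.
Proof.
under eq_bigr => k _ do rewrite mulr_suml.
rewrite exchange_big /=; apply: eq_bigr => m _.
by rewrite -BINOM_U mulr_sumr; apply: eq_bigr => k _; ring.
Qed.


Lemma det_closed (P : algC -> Prop) (N : nat) (M : 'M[algC]_N) :
  P 0 -> P 1 -> (forall x y, P x -> P y -> P (x + y)) ->
  (forall x y, P x -> P y -> P (x * y)) -> (forall x, P x -> P (- x)) ->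
  (forall i j, P (M i j)) -> P (\det M).
Proof.
move=> P0 P1 PD PM PN PE.
have Pm1 : forall k, P ((-1) ^+ k).
  elim=> [|k IH]; first by rewrite expr0.
  by rewrite exprS; apply: (PM) => //; apply: (PN).
rewrite /determinant; apply: (big_ind P) => // s _; apply: (PM) => //.
by apply: (big_ind P) => // *; apply: (PE).
Qed.

Lemma adj_closed (P : algC -> Prop) (N : nat) (M : 'M[algC]_N) :
  P 0 -> P 1 -> (forall x y, P x -> P y -> P (x + y)) ->
  (forall x y, P x -> P y -> P (x * y)) -> (forall x, P x -> P (- x)) ->
  (forall i j, P (M i j)) -> forall i j, P (\adj M i j).
Proof.
move=> P0 P1 PD PM PN PE i j.
have Pm1 : forall k, P ((-1) ^+ k).
  elim=> [|k IH]; first by rewrite expr0.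
  by rewrite exprS; apply: (PM) => //; apply: (PN).
rewrite mxE /cofactor; apply: (PM) => //.
by apply: det_closed => // a b; rewrite !mxE.
Qed.

Lemma zpow_inj (i j : nat) : (i < n)%N -> (j < n)%N -> z ^+ i = z ^+ j -> i = j.
Proof.
move=> iN jN /eqP; rewrite (eq_prim_root_expr pz) !modn_small //; by move/eqP.
Qed.

Lemma usub {i j} : (i <= j)%N -> u j - u i = z ^+ i * u (j - i).
Proof.
move=> ij; apply: (mulfI t_neq0).
rewrite mulrBr !tu mulrCA tu mulrBr mulr1 -exprD subnKC //; ring.
Qed.

Lemma u_inj (i j : nat) : (i < n)%N -> (j < n)%N -> u i = u j -> i = j.
Proof.
move=> iN jN e; apply: zpow_inj => //.
have := congr1 (fun x => 1 - t * x) e; rewrite !tu; move=> h; by rewrite -[z ^+ i](subKr 1) h subKr.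
Qed.

Definition Vm : 'M[algC]_n := \matrix_(k, m) u m ^+ k.

Lemma detV : \det Vm = \prod_(i < n) \prod_(j < n | (i < j)%N) (u j - u i).
Proof.
have -> : Vm = Vandermonde n (\row_(m < n) u m) by apply/matrixP => k m; rewrite !mxE.
by rewrite det_Vandermonde; apply: eq_bigr => i _; apply: eq_bigr => j _; rewrite !mxE.
Qed.

Lemma detV_neq0 : \det Vm != 0.
Proof.
rewrite detV; apply/prodf_neq0 => i _; apply/prodf_neq0 => j ij.
rewrite subr_eq0; apply/eqP => /u_inj h.
by move: ij; rewrite h ?ltnn.
Qed.

Lemma COUNT0 j : (\sum_(i < j) (p %| j - i) = j %/ p)%N.
Proof.
elim: j => [|j IH]; first by rewrite big_ord0 div0n.
by rewrite big_ord_recl /= subn0 divnS ?p_gt0 // -IH; congr (_ + _)%N.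
Qed.

Lemma COUNT (j : 'I_n) : (\sum_(i < n | (i < j)%N) (p %| j - i) = j %/ p)%N.
Proof.
by rewrite -(big_ord_widen _ (fun i => nat_of_bool (p %| j - i)%N) (ltnW (ltn_ord j))) COUNT0.
Qed.

Lemma DeltaE : exists W, unitR W /\ \det Vm = t ^+ (\sum_(d < n) e d) * W.
Proof.
pose eps (i j : 'I_n) := ((p - 1) * (p %| j - i))%N.
exists (\prod_(j < n) \prod_(i < n | (i < j)%N) ((u j - u i) / t ^+ eps i j)); split.
  apply: unitRprod => j _; apply: unitRprod => i ij.
  have hm : (0 < j - i < n)%N.
    rewrite subn_gt0 ij /=.
    exact: (leq_ltn_trans (leq_subr _ _) (ltn_ord j)).
  have [v [uv [Rv ev]]] := UDEC (j - i) hm.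
  have -> : (u j - u i) / t ^+ eps i j = z ^+ i * v.
    rewrite (usub (ltnW ij)) ev /eps; field.
    by rewrite expf_neq0 // t_neq0.
  exact: unitRM (unitRzX _) uv.
rewrite detV (exchange_big_dep xpredT) //=.
rewrite -prodrXr -big_split /=; apply: eq_bigr => j _.
have -> : t ^+ e j = \prod_(i < n | (i < j)%N) t ^+ eps i j.
  rewrite prodrXr /eps -big_distrr /= COUNT /e mulnC //.
rewrite -big_split /=; apply: eq_bigr => i _.
by rewrite mulrC divfK ?expf_neq0 ?t_neq0.
Qed.
Definition divp x := exists k c, R c /\ x * c = (n%:R) ^+ k.

Lemma divpM x y : divp x -> divp y -> divp (x * y).
Proof.
case=> k1 [c1 [R1 e1]] [k2 [c2 [R2 e2]]]; exists (k1 + k2)%N, (c1 * c2); split; first by apply: RM.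
by rewrite mulrACA e1 e2 exprD.
Qed.

Lemma divp_unit x : unitR x -> divp x.
Proof. by case=> y [Ry xy]; exists 0%N, y; rewrite expr0. Qed.

Lemma divp_u l : (0 < l < n)%N -> divp (u l).
Proof.
move=> hl; exists 1%N, (t * \prod_(k <- index_iota 1 n | k != l) (1 - z ^+ k)); split.
  by apply: RM; [exact: Rt | apply: Rprod => *; apply: RB; [exact: R1 | exact: RzX]].
rewrite expr1 -(PRODX n_gt1 pz) (bigD1_seq l) ?iota_uniq ?mem_index_iota //.
by rewrite -tu mulrA [u l * t]mulrC.
Qed.

Lemma divp_prod (I : Type) (r : seq I) (P : pred I) (F : I -> algC) :
  (forall i, P i -> divp (F i)) -> divp (\prod_(i <- r | P i) F i).
Proof.
move=> H; apply: (big_ind divp) => //; last exact: divpM.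
by apply: divp_unit; exists 1; split; [exact: R1 | rewrite mulr1].
Qed.

Lemma divp_Delta : divp (\det Vm).
Proof.
rewrite detV; apply: divp_prod => i _; apply: divp_prod => j ij.
rewrite (usub (ltnW ij)); apply: divpM; first by apply: divp_unit; apply: unitRzX.
by apply: divp_u; rewrite subn_gt0 ij (leq_ltn_trans (leq_subr _ _)).
Qed.

Lemma RpR x k : Rp x -> R ((n%:R) ^+ k * x) -> R x.
Proof.
case=> s [y [ns [Ry ex]]] Rnx.
have cop : ~~ (p%:Z %| s)%Z := ns.
have [a [b eab]] : exists a b : int, a * s + b * (n ^ k)%:Z = 1.
  case: (Bezoutz s (n ^ k)%N) => a [b e]; exists a, b; rewrite e.
  suff : coprimez s (n ^ k)%N by move/eqP.
  rewrite coprimezE /= -expnM coprime_sym coprimeXl // prime_coprime // -dvdzE //.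
have sne := ndvd_neq0 ns.
have E' : a%:~R * s%:~R + b%:~R * (n%:R) ^+ k = 1 :> algC.
  have := congr1 (fun q : int => (q%:~R : algC)) eab; rewrite /= intrD !intrM => E.
  apply: etrans E; congr (_ + _ * _).
  by rewrite -natrX.
have -> : x = a%:~R * y + b%:~R * ((n%:R) ^+ k * x).
  transitivity ((a%:~R * s%:~R + b%:~R * (n%:R) ^+ k) * x); first by rewrite E' mul1r.
  rewrite ex; field; by rewrite sne.
by apply: RD; apply: RM => //; apply: Rint.
Qed.

Lemma size_Xf a b : (size ('X^a * f ^+ b)%R <= (a + p * b).+1)%N.
Proof.
rewrite (leq_trans (size_polyMleq _ _)) // size_polyXn.
have := size_poly_exp_leq f b; rewrite (proj1 size_lead_f) /= => h.
by rewrite (leq_trans (leq_add (leqnn _) h)) // addnS.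
Qed.

Lemma ab_lt_n a b : (a < p)%N -> (b < p)%N -> (a + p * b < n)%N.
Proof.
move=> ap bp; apply: (@leq_trans (p + p * b)); first by rewrite ltn_add2r.
by rewrite -mulnS expnS expn1 leq_mul2l bp orbT.
Qed.

Lemma image_W2 (A : 'I_n -> algC) : (forall i, R (A i)) -> W2 p z (omega p z A).
Proof.
move=> RA; exists (fun k : 'I_n => \sum_(m < n) A m * u m ^+ k); split.
  move=> k; apply: Rsum => m _; apply: RM => //; apply: RX; apply: Ru.
split; last by move=> j; rewrite OMEGA.
move=> a b ap bp.
suff : dvd (b * (p - 1)) (peval n ('X^a * f ^+ b) (fun k : 'I_n => \sum_(m < n) A m * u m ^+ k)) by [].
rewrite (@PEVAL n _ A (fun m : 'I_n => u m)); last first.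
  by rewrite (leq_trans (size_Xf a b)) // ab_lt_n.
apply: dvd_sum => m _; apply: dvdMl; first by apply: Rp_R.
rewrite hornerM hornerXn horner_exp; apply: dvdMl; first by apply: Rp_R; apply: RX; apply: Ru.
by rewrite mulnC; apply: dvdX; apply: KF.
Qed.

Lemma W2_image w : W2 p z w -> exists A, inGR p z A /\ forall j, omega p z A j = w j.
Proof.
case=> zs [Rzs [cond ew]].
have Vu : Vm \in unitmx by rewrite unitmxE unitfE detV_neq0.
pose Z : 'cV_n := \col_k zs k.
pose Ac := invmx Vm *m Z.
pose A := fun m : 'I_n => Ac m 0.
have zsE : forall k, zs k = \sum_(m < n) A m * u m ^+ k.
  move=> k; have := congr1 (fun M : 'cV_n => M k 0) (mulKVmx Vu Z).
  rewrite /= !mxE => <-; apply: eq_bigr => m _; by rewrite mxE mulrC.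
exists A; split; last first.
  by move=> j; rewrite ew -OMEGA; apply: eq_bigr => k _; rewrite zsE.
move=> m.
have dA : R (\det Vm * A m).
  rewrite /A; have -> : Ac = (\det Vm)^-1 *: (\adj Vm *m Z) by rewrite /Ac /invmx Vu scalemxAl.
  rewrite mxE mulrA divff ?detV_neq0 // mul1r mxE.
  apply: Rsum => k _; apply: RM; last by rewrite mxE.
  apply: adj_closed; [exact: R0|exact: R1|exact: RD|exact: RM|exact: RN|].
  by move=> i j; rewrite mxE; apply: RX; apply: Ru.
pose H : 'M[algC]_n := \matrix_(d, k) ((g d).[u k] / t ^+ e d).
have Hent : forall d k, Rp (H d k).
  move=> d k; rewrite mxE g_eval.
  have dv : dvd (e d) ((u k) ^+ (d %% p) * (f.[u k]) ^+ (d %/ p)).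
    rewrite /e mulnC; apply: dvdMl; first by apply: Rp_R; apply: RX; apply: Ru.
    by apply: dvdX; apply: KF.
  case: dv => y [Ry ->]; by rewrite mulrC mulKf ?expf_neq0 ?t_neq0.
have HA : forall d, Rp ((H *m Ac) d 0).
  move=> d; rewrite mxE.
  have ad : (d %% p < p)%N by rewrite ltn_pmod ?p_gt0.
  have bd : (d %/ p < p)%N.
    by rewrite ltn_divLR ?p_gt0 //; have := ltn_ord d; rewrite expnS expn1.
  have [y [Ry ey]] := cond _ _ ad bd.
  have pe : peval n (g d) zs = \sum_(m < n) A m * (g d).[u m].
    rewrite -(@PEVAL n (g d) A (fun m : 'I_n => u m)); last first.
      exact: leq_trans (size_g d) (ltn_ord d).
    by rewrite /peval; apply: eq_bigr => k _; rewrite zsE.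
  have -> : \sum_(k < n) H d k * Ac k 0 = peval n (g d) zs / t ^+ e d.
    rewrite pe mulr_suml; apply: eq_bigr => k _; rewrite mxE /A.
    by rewrite mulrAC [(g d).[u k] * _]mulrC.
  by rewrite /g ey /e mulrC mulKf ?expf_neq0 ?t_neq0.
have dH : Rp (\det H * A m).
  have : \adj H *m (H *m Ac) = \det H *: Ac by rewrite mulmxA mul_adj_mx mul_scalar_mx.
  move/(congr1 (fun M : 'cV_n => M m 0)); rewrite /= [in RHS]mxE /A => <-.
  rewrite mxE; apply: Rpsum => k _; apply: RpM => //.
  by apply: adj_closed; [exact: Rp0|exact: Rp1|exact: RpD|exact: RpM|exact: RpN|].
have [W [uW eD]] := DeltaE.
set E := \sum_(d < n) e d in eD.
pose G := \prod_(d < n) gam ^+ (d %/ p).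
pose T : 'M[algC]_n := \matrix_(d, k) (g d)`_k.
have detH : \det H = G * W.
  have -> : H = diag_mx (\row_(d < n) (t ^+ e d)^-1) *m (T *m Vm).
    apply/matrixP => d k; rewrite mul_diag_mx !mxE.
    rewrite (horner_coef_wide _ (leq_trans (size_g d) (ltn_ord d))).
    rewrite mulrC; congr (_ * _); apply: eq_bigr => i _; by rewrite !mxE.
  rewrite !det_mulmx det_diag det_trig; last first.
    by apply/is_trig_mxP => i j ij; rewrite mxE; exact: coef_g_high.
  rewrite eD.
  have -> : \prod_i (\row_(d < n) (t ^+ e d)^-1) 0 i = (t ^+ E)^-1.
    rewrite (eq_bigr (fun d : 'I_n => (t ^+ e d)^-1)) => [|d _]; last by rewrite mxE.
    by rewrite prodfV prodrXr.
  have -> : \prod_i T i i = G.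
    by rewrite /G; apply: eq_bigr => d _; rewrite mxE coef_g_diag.
  field; by rewrite expf_neq0 // t_neq0.
have RpG : Rp G by apply: Rpprod => d _; apply: RpX; apply: Rp_gam.
have nG : ~ dvd 1 G.
  rewrite /G prodrXr; apply: not_dvd1_X; [exact: Rp_gam | exact: gam_nd].
have db : dvd E (G * (\det Vm * A m)).
  exists (\det H * A m); split => //.
  rewrite detH eD; ring.
have [y [Ry ey]] := Cancel _ RpG nG _ _ (Rp_R _ dA) db.
rewrite eD in ey.
have WA : W * A m = y.
  apply: (mulfI (expf_neq0 E t_neq0)); by rewrite -ey mulrA.
have RpA : Rp (A m).
  case: uW => W' [RW' WW'].
  have -> : A m = W' * y by rewrite -WA mulrA [W' * W]mulrC WW' mul1r.
  by apply: RpM => //; apply: Rp_R.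
have [k [c [Rc ec]]] := divp_Delta.
apply: (RpR _ k) => //.
rewrite -ec; have -> : \det Vm * c * A m = c * (\det Vm * A m) by ring.
by apply: RM.
Qed.

Lemma W1_W0 w : W1 p z w -> W0 p z w.
Proof.
case=> zs [Rzs ew] j; rewrite ew; apply: Rsum => k _; apply: RM => //.
rewrite /xi; apply: RM; last exact: Rnat.
by apply: RM; apply: RX; [apply: RN; exact: R1 | exact: Rt].
Qed.

Lemma omegaD (a b : 'I_n -> algC) (j : 'I_n) :
  omega p z (fun i => a i + b i) j = omega p z a j + omega p z b j.
Proof. by rewrite /omega -big_split; apply: eq_bigr => i _; rewrite mulrDl. Qed.

Lemma omegaM (a b : 'I_n -> algC) (j : 'I_n) :
  omega p z (grmul p a b) j = omega p z a j * omega p z b j.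
Proof.
rewrite /omega /grmul mulr_suml.
under eq_bigr => k _ do rewrite mulr_suml.
rewrite exchange_big /=.
apply: eq_bigr => i _.
rewrite mulr_sumr.
under eq_bigr => k _ do rewrite mulr_suml.
rewrite (exchange_big_dep xpredT) //=; apply: eq_bigr => i' _.
have hk : ((i + i') %% n < n)%N by rewrite ltn_pmod // (ltn_trans _ n_gt1).
rewrite (big_pred1 (Ordinal hk)); last by move=> k /=; rewrite eq_sym.
rewrite /= exprM prim_expr_mod // -exprM mulnDl exprD; ring.
Qed.

Lemma omega_inj (a b : 'I_n -> algC) :
  (forall j, omega p z a j = omega p z b j) -> forall i, a i = b i.
Proof.
move=> e i.
pose Vz : 'M[algC]_n := \matrix_(j, k) z ^+ (k * j).
have VzE : Vz = Vandermonde n (\row_(k < n) z ^+ k).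
  by apply/matrixP => j k; rewrite !mxE exprM.
have Vu : Vz \in unitmx.
  rewrite unitmxE unitfE VzE det_Vandermonde; apply/prodf_neq0 => k _.
  apply/prodf_neq0 => l kl; rewrite !mxE subr_eq0; apply/eqP => /zpow_inj h.
  by move: kl; rewrite h ?ltnn.
pose c : 'cV_n := \col_k (a k - b k).
have Vc : Vz *m c = 0.
  apply/matrixP => j k; rewrite !mxE.
  transitivity (\sum_(l < n) (a l * z ^+ (l * j) - b l * z ^+ (l * j))).
    by apply: eq_bigr => l _; rewrite !mxE; ring.
  by rewrite sumrB; apply/eqP; rewrite subr_eq0; apply/eqP; exact: e j.
have : c = 0 by rewrite -(mulKmx Vu c) Vc mulmx0.
move/matrixP => /(_ i 0); rewrite !mxE => /eqP; by rewrite subr_eq0 => /eqP.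
Qed.

Lemma main_thm :
  [/\ (forall w, W2 p z w -> W1 p z w),
      (forall w, W1 p z w -> W0 p z w),
      (forall (a b : 'I_(p ^ 2) -> algC) (j : 'I_(p ^ 2)),
         omega p z (fun i => a i + b i) j = omega p z a j + omega p z b j),
      (forall (a b : 'I_(p ^ 2) -> algC) (j : 'I_(p ^ 2)),
         omega p z (grmul p a b) j = omega p z a j * omega p z b j)
    & (forall a b, inGR p z a -> inGR p z b ->
         (forall j, omega p z a j = omega p z b j) -> forall i, a i = b i)] /\
  (forall w, W2 p z w <->
     exists a, inGR p z a /\ forall j, omega p z a j = w j).
Proof.
split; first split.
- by move=> w [zs [Rzs [_ ew]]]; exists zs.
- exact: W1_W0.
- exact: omegaD.
- exact: omegaM.
- by move=> a b _ _; apply: omega_inj.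
move=> w; split; first exact: W2_image.
case=> a [Ra ea]; case: (image_W2 a Ra) => zs [H1 [H2 H3]].
exists zs; split => //; split => // j; by rewrite -ea H3.
Qed.

End Main.

Theorem proposition3p28 (p : nat) (z : algC) :
  prime p -> (p ^ 2).-primitive_root z ->
  [/\ (forall w, W2 p z w -> W1 p z w),
      (forall w, W1 p z w -> W0 p z w),
      (forall (a b : 'I_(p ^ 2) -> algC) (j : 'I_(p ^ 2)),
         omega p z (fun i => a i + b i) j = omega p z a j + omega p z b j),
      (forall (a b : 'I_(p ^ 2) -> algC) (j : 'I_(p ^ 2)),
         omega p z (grmul p a b) j = omega p z a j * omega p z b j)
    & (forall a b, inGR p z a -> inGR p z b ->
         (forall j, omega p z a j = omega p z b j) -> forall i, a i = b i)] /\
  (forall w, W2 p z w <->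
     exists a, inGR p z a /\ forall j, omega p z a j = w j).
Proof. by move=> pr pz; apply: main_thm. Qed.
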